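(* Let $N\ge1$ and $0<s<1$. There exists a constant $C^*>0$ such that $$\mathfrak{p}_t(z)\ge C^*t^{-\frac{N}{2s}}\quad\text{for all } t>1 \text{ and all } z\in\mathbb{R}^N \text{ with } |z|\le t^{1/2}.$$
   Context: For $t>0$ let $\mathfrak{h}^{(s)}_t$ be the heat kernel of $-(-\Delta)^s$ on $\mathbb{R}^N$; it satisfies, for some constant $C_0\ge1$, $C_0^{-1}\min\{t^{-N/(2s)},t|x|^{-N-2s}\}\le\mathfrak{h}^{(s)}_t(x)\le C_0\min\{t^{-N/(2s)},t|x|^{-N-2s}\}$ for all $x\in\mathbb{R}^N$, $t>0$. The heat kernel of $-\mathcal{L}$, $\mathcal{L}=-\Delta+(-\Delta)^s$, is $\mathfrak{p}_t(z)=(4\pi t)^{-N/2}\int_{\mathbb{R}^N}e^{-|z-\xi|^2/(4t)}\mathfrak{h}^{(s)}_t(\xi)\,d\xi$. *)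

(* Defs.v *)
From HB Require Import structures.
From mathcomp Require Import all_boot all_order all_algebra.
From mathcomp Require Import all_classical all_reals all_analysis.
Set Implicit Arguments. Unset Strict Implicit. Unset Printing Implicit Defensive.
Import Order.TTheory GRing.Theory Num.Theory.
Local Open Scope ring_scope.

Definition sqnorm {R : realType} {N : nat} (x : N.-tuple R) : R :=
  \sum_(i < N) (tnth x i) ^+ 2.
Definition enorm {R : realType} {N : nat} (x : N.-tuple R) : R :=
  Num.sqrt (sqnorm x).
Definition sqdist {R : realType} {N : nat} (x y : N.-tuple R) : R :=
  \sum_(i < N) (tnth x i - tnth y i) ^+ 2.

(* Lebesgue integral over R^N of a function with values in \bar R, written as
   the iterated integral  \int dx_1 ... \int dx_N f(x_1,...,x_N)
   (Tonelli: equals the N-dimensional Lebesgue integral for nonnegative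
   measurable integrands). *)
Fixpoint integralRN {R : realType} (N : nat) :
    (N.-tuple R -> \bar R) -> \bar R :=
  match N return (N.-tuple R -> \bar R) -> \bar R with
  | 0 => fun f => f [tuple]
  | n.+1 => fun f =>
      (\int[@lebesgue_measure R]_(x in [set: R])
          integralRN (fun t : n.-tuple R => f [tuple of x :: t]))%E
  end.

(* The two-sided comparison function min{ t^{-N/(2s)}, t |x|^{-N-2s} };
   at x = 0 the second term is +infinity, so the min is t^{-N/(2s)}. *)
Definition frac_bound {R : realType} (N : nat) (s t : R) (x : N.-tuple R) : R :=
  if x == [tuple of nseq N 0] then t `^ (- (N%:R / (2 * s)))
  else Num.min (t `^ (- (N%:R / (2 * s))))
               (t * enorm x `^ (- (N%:R + 2 * s))).

Definition heat_p {R : realType} (N : nat) (h : R -> N.-tuple R -> R)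
    (t : R) (z : N.-tuple R) : \bar R :=
  ((4 * pi * t) `^ (- (N%:R / 2)))%:E *
  integralRN (fun xi : N.-tuple R =>
      (expR (- (sqdist z xi / (4 * t))) * h t xi)%:E).

Arguments frac_bound {R} N s t x.
Arguments heat_p {R} N h t z.

(* Main.v *)
Require Import Defs.
From HB Require Import structures.
From mathcomp Require Import all_boot all_order all_algebra.
From mathcomp Require Import all_classical all_reals all_analysis.
Import Order.TTheory GRing.Theory Num.Theory.
Local Open Scope ring_scope.
From mathcomp Require Import ring lra.
Section Aux.
Import HBNNSimple.
Local Open Scope ereal_scope.
Context {R : realType}.

Lemma le_int_scaled_indic d (T : measurableType d) (mu : {measure set T -> \bar R})
  (A : set T) (mA : measurable A) (k : R) (f : T -> \bar R) :
  (0 <= k)%R -> (forall x, 0 <= f x) -> (forall x, (k * \1_A x)%:E <= f x) ->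
  k%:E * mu A <= \int[mu]_x f x.
Proof.
move=> k0 f0 hf.
pose h := scale_nnsfun (indic_nnsfun R mA) k0.
have -> : k%:E * mu A = \int[mu]_x (h x)%:E.
  rewrite /h /=.
  rewrite (@integralZl_indic _ _ _ _ _ measurableT (fun _ => A)) //.
    by rewrite integral_indic // setIT.
  by move=> /lt_le_trans /(_ k0); rewrite ltxx.
rewrite integralT_nnsfun ge0_integralTE //.
by apply: ereal_sup_ubound; exists h.
Qed.

Lemma integralRN_ge0 n (f : n.-tuple R -> \bar R) :
  (forall x, 0 <= f x) -> 0 <= integralRN f.
Proof.
elim: n f => [|n IH] f f0 /=; first exact: f0.
by apply: integral_ge0 => x _; apply: IH.
Qed.

End Aux.
Section Aux2.
Local Open Scope ereal_scope.
Context {R : realType}.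

Definition gI (a : R) {n} (xi : n.-tuple R) : R :=
  (\prod_(i < n) \1_(`[(-a)%R, a]%classic) (tnth xi i))%R.

Lemma gI_cons (a : R) n x (t : n.-tuple R) :
  gI a [tuple of x :: t] = (\1_(`[(-a)%R, a]%classic) x * gI a t)%R.
Proof.
rewrite /gI big_ord_recl tnth0; congr (_ * _)%R.
by apply: eq_bigr => i _; rewrite tnthS.
Qed.

Lemma integralRN_lb (a : R) n (f : n.-tuple R -> \bar R) (k : R) :
  (0 <= a)%R -> (0 <= k)%R -> (forall xi, 0 <= f xi) ->
  (forall xi, (k * gI a xi)%:E <= f xi) ->
  (k * (2 * a) ^+ n)%:E <= integralRN f.
Proof.
move=> a0; elim: n f k => [|n IH] f k k0 f0 hf /=.
  by have := hf [tuple]; rewrite /gI big_ord0 expr0.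
have := @le_int_scaled_indic R _ _ (@lebesgue_measure R) _
   (measurable_itv `[(-a)%R, a]) (k * (2 * a) ^+ n)
   (fun x => integralRN (fun t : n.-tuple R => f [tuple of x :: t])).
move=> H; move: H; set M := (X in _ * X <= _).
have -> : M = lebesgue_measure [set` `[(-a)%R, a]] by [].
rewrite lebesgue_measure_itv /= lte_fin.
have [a0'|] := ltrP (-a) a; last first.
  move=> aa _; have -> : a = 0%R by lra.
  rewrite mulr0 expr0n /= mulr0; apply: integral_ge0 => x _; exact: integralRN_ge0.
move=> H; apply: le_trans (H _ _ _).
- rewrite -EFinD -EFinM lee_fin.
  have -> : (a + - - a = 2 * a)%R by lra.
  by rewrite exprS (mulrC (2 * a)%R) mulrA lexx.
- by rewrite mulr_ge0 // exprn_ge0 // mulr_ge0.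
- by move=> x; exact: integralRN_ge0.
move=> x; rewrite -mulrA (mulrC ((2 * a) ^+ n)%R) mulrA.
apply: IH.
- by rewrite mulr_ge0.
- by move=> t; exact: f0.
by move=> t; have := hf [tuple of x :: t]; rewrite gI_cons mulrA.
Qed.
End Aux2.
Section Aux3.
Context {R : realType}.

Lemma gI_cases (a : R) {n} (xi : n.-tuple R) :
  gI a xi = 0 \/ (gI a xi = 1 /\ forall i, -a <= tnth xi i <= a).
Proof.
case: (boolP [forall i, (-a <= tnth xi i <= a)]) => H.
  right; split; last by move=> i; exact: (forallP H i).
  rewrite /gI big1 // => i _; rewrite indicE mem_set //=.
  by rewrite in_itv /=; exact: (forallP H i).
left; move/forallPn: H => [i Hi].
rewrite /gI (bigD1 i) //= indicE memNset ?mul0r //=.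
by rewrite in_itv /=; apply/negP.
Qed.

Lemma sqnorm_ge0 {n} (x : n.-tuple R) : 0 <= sqnorm x.
Proof. by apply: sumr_ge0 => i _; exact: sqr_ge0. Qed.

Lemma sqnorm_eq0 {n} (x : n.-tuple R) : sqnorm x = 0 -> x = [tuple of nseq n 0].
Proof.
move=> /eqP; rewrite /sqnorm psumr_eq0; last by move=> i _; exact: sqr_ge0.
move=> /allP H; apply: eq_from_tnth => i; rewrite tnth_nseq.
by have := H i (mem_index_enum _); rewrite sqrf_eq0 => /eqP.
Qed.

Lemma sqdist_le {n} (x y : n.-tuple R) : sqdist x y <= 2 * sqnorm x + 2 * sqnorm y.
Proof.
rewrite /sqdist /sqnorm !mulr_sumr -big_split /=; apply: ler_sum => i _.
set u := tnth x i; set v := tnth y i.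
have := sqr_ge0 (u + v); rewrite !expr2; nra.
Qed.

Lemma expo_ineq (N : nat) (s : R) : (0 < N)%N -> 0 < s -> s < 1 ->
  - (N%:R / (2 * s)) <= 1 + - (2^-1 * (N%:R + 2 * s)).
Proof.
move=> N0 s0 s1.
have hN : (0 : R) <= N%:R by rewrite ler0n.
have h2 : (2 : R)^-1 <= (2 * s)^-1.
  rewrite lef_pV2 ?posrE ?mulr_gt0 //; lra.
have hu : N%:R * 2^-1 <= N%:R / (2 * s) by rewrite ler_wpM2l.
lra.
Qed.

End Aux3.
Theorem lemma2p6 (R : realType) (N : nat) (s C0 : R)
  (h : R -> N.-tuple R -> R) :
  (0 < N)%N -> 0 < s -> s < 1 -> 1 <= C0 ->
  (forall t : R, 0 < t -> measurable_fun [set: N.-tuple R] (h t)) ->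
  (forall (t : R) (x : N.-tuple R), 0 < t ->
      C0^-1 * frac_bound N s t x <= h t x /\ h t x <= C0 * frac_bound N s t x) ->
  exists Cstar : R, 0 < Cstar /\
    forall (t : R) (z : N.-tuple R), 1 < t -> enorm z <= Num.sqrt t ->
      ((Cstar * t `^ (- (N%:R / (2 * s))))%:E <= heat_p N h t z)%E.
Proof.
move=> N0 s0 s1 C01 hm hb.
have C00 : 0 < C0 by lra.
have Nn0 : (0 : R) < N%:R by rewrite ltr0n.
have pi4 : 0 < 4 * pi :> R by rewrite mulr_gt0 // pi_gt0.
exists (expR (-1) * C0^-1 * ((4 * pi) `^ (N%:R / 2))^-1 * (2 / N%:R) ^+ N).
split.
  rewrite !mulr_gt0 ?expR_gt0 ?invr_gt0 ?powR_gt0 ?exprn_gt0 ?divr_gt0 //.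
move=> t z t1 hz.
have t0 : 0 < t by lra.
have sq0 : 0 < Num.sqrt t by rewrite sqrtr_gt0.
set T := t `^ (- (N%:R / (2 * s))).
have T0 : 0 < T by exact: powR_gt0.
set a := Num.sqrt t / N%:R.
have a0 : 0 <= a by rewrite divr_ge0 ?sqrtr_ge0 ?ler0n.
set c := expR (-1) * C0^-1 * T.
have c0 : 0 <= c by rewrite !mulr_ge0 ?expR_ge0 ?invr_ge0 ?ltW.
have fb0 : forall xi, 0 <= frac_bound N s t xi.
  move=> xi; rewrite /frac_bound; case: ifP => _; first exact: powR_ge0.
  by rewrite le_min powR_ge0 mulr_ge0 ?powR_ge0 ?ltW.
have h0 : forall xi, 0 <= h t xi.
  move=> xi; apply: le_trans (hb t xi t0).1.
  by rewrite mulr_ge0 ?invr_ge0 ?fb0 ?ltW.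
have hzz : sqnorm z <= t.
  by move: hz; rewrite /enorm ler_sqrt // ltW.
have key : forall xi, ((c * gI a xi)%:E <=
    (expR (- (sqdist z xi / (4 * t))) * h t xi)%:E)%E.
  move=> xi; rewrite lee_fin.
  have [g0|[g1 hxi]] := gI_cases a xi.
    by rewrite g0 mulr0 mulr_ge0 ?expR_ge0.
  have hxi2 : sqnorm xi <= t.
    have : sqnorm xi <= \sum_(i < N) a ^+ 2.
      apply: ler_sum => i _; have /andP[l r] := hxi i; nra.
    move/le_trans; apply.
    rewrite sumr_const card_ord -mulr_natl /a expr_div_n sqr_sqrtr ?(ltW t0) //.
    have -> : N%:R * (t / N%:R ^+ 2) = t / N%:R.
      by field; rewrite gt_eqF.
    rewrite ler_pdivrMr // ler_peMr ?(ltW t0) //.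
    by rewrite ler1n.
  rewrite g1 mulr1 /c -mulrA.
  apply: ler_pM; first exact: expR_ge0.
  - by rewrite mulr_ge0 ?invr_ge0 ?ltW.
  - rewrite ler_expR lerN2 ler_pdivrMr ?mulr_gt0 // mul1r.
    apply: le_trans (sqdist_le z xi) _.
    lra.
  apply: le_trans (hb t xi t0).1.
  rewrite ler_wpM2l ?invr_ge0 ?(ltW C00) //.
  rewrite /frac_bound; case: ifP => hx; first exact: lexx.
  rewrite le_min lexx /=.
  have e0 : 0 < enorm xi.
    rewrite /enorm sqrtr_gt0 lt_def sqnorm_ge0 andbT; apply/eqP => /sqnorm_eq0 E.
    by rewrite E eqxx in hx.
  have he : enorm xi <= Num.sqrt t by rewrite /enorm ler_sqrt // ltW.
  have q0 : 0 < N%:R + 2 * s by lra.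
  rewrite powRN.
  have hq : enorm xi `^ (N%:R + 2 * s) <= Num.sqrt t `^ (N%:R + 2 * s).
    by apply: ge0_ler_powR; rewrite ?nnegrE ?(ltW q0) ?(ltW e0) ?sqrtr_ge0.
  have hq' : (Num.sqrt t `^ (N%:R + 2 * s))^-1 <= (enorm xi `^ (N%:R + 2 * s))^-1.
    have p1 := powR_gt0 (N%:R + 2 * s) sq0; have p2 := powR_gt0 (N%:R + 2 * s) e0.
    by rewrite lef_pV2 ?posrE.
  apply: le_trans (ler_wpM2l (ltW t0) hq').
  rewrite -powR12_sqrt ?(ltW t0) // -powRrM -powRN.
  rewrite -[X in _ <= X * _](powRr1 (ltW t0)) -powRD; last by apply/implyP => _; rewrite gt_eqF.
  apply: ler_powR; first exact: ltW.
  exact: expo_ineq.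
have nn : forall xi : N.-tuple R,
    (0 <= (expR (- (sqdist z xi / (4 * t))) * h t xi)%:E)%E.
  by move=> xi; rewrite lee_fin mulr_ge0 ?expR_ge0.
have lb := @integralRN_lb R a N _ c a0 c0 nn key.
rewrite /heat_p; apply: le_trans (lee_wpmul2l _ lb); last first.
  by rewrite lee_fin; exact: powR_ge0.
rewrite -EFinM lee_fin.
have E1 : t `^ (N%:R / 2) = Num.sqrt t ^+ N.
  rewrite -powR12_sqrt ?(ltW t0) // -powR_mulrn ?powR_ge0 // -powRrM.
  by rewrite mulrC.
rewrite powRN (@powRM R (4 * pi) t (N%:R / 2) (ltW pi4) (ltW t0)) E1 /c /a.
have P0 : 0 < (4 * pi) `^ (N%:R / 2) :> R by exact: powR_gt0.
rewrite le_eqVlt; apply/orP; left; apply/eqP.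
rewrite !exprMn ?exprVn.
field.
by rewrite !expf_neq0 ?gt_eqF.

Qed.
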